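(* For a stationary policy $\pi$ and $h\ge0$ let $$\overline V^\pi_{0:h}(s):=\min_{\{\hat P_t\}_{t=0}^h}\mathbb E\Big[\sum_{t=0}^h\gamma^t\big(r(s_t,a_t)+\gamma D(\hat P_{t;s_t,a_t},P_{s_t,a_t})\big)\,\Big|\,s_0=s\Big],$$ with $a_t\sim\pi(\cdot|s_t)$, $s_{t+1}\sim\hat P_{t;s_t,a_t}$, and set $\overline V^\pi_{0:-1}:=0$. Then for all $h\ge-1$, $\overline V^\pi_{0:h+1}=\mathcal T^\pi\overline V^\pi_{0:h}$, where $[\mathcal T^\pi V](s)=\sum_a\pi(a|s)(r(s,a)-\gamma\sigma(P_{s,a},V))$. Moreover, for every initial state $s$ the minimum is attained by the same kernels $\hat P^\pi_{t|h;s,a}\in\arg\min_{\hat\mu\in\Delta(\mathcal S)}\big(D(\hat\mu,P_{s,a})+\mathbb E_{s'\sim\hat\mu}\overline V^\pi_{0:h-t-1}(s')\big)$, $t=0,\dots,h$.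
   Context: $\mathcal S$, $\mathcal A$ finite; $\Delta(\mathcal X)$ is the probability simplex over $\mathcal X$. $P=\{P_{s,a}\}$, $P_{s,a}\in\Delta(\mathcal S)$, is the nominal kernel, $r:\mathcal S\times\mathcal A\to[0,1]$, $\gamma\in[0,1)$. A stationary policy is a map $\pi:\mathcal S\to\Delta(\mathcal A)$. A function $\sigma:\mathbb R^{\mathcal S}\to\mathbb R$ is a convex risk measure if (i) $V'\le V$ pointwise implies $\sigma(V)\le\sigma(V')$; (ii) $\sigma(V+m)=\sigma(V)-m$ for constants $m$; (iii) $\sigma$ is convex. For each $(s,a)$ a convex risk measure $\sigma(P_{s,a},\cdot)$ is given and $D(\hat\mu,P_{s,a}):=\sup_{V}\big(-\sigma(P_{s,a},V)-\mathbb E_{s'\sim\hat\mu}V(s')\big)$; it is known that then $\sigma(P_{s,a},V)=\sup_{\hat\mu\in\Delta(\mathcal S)}(-\mathbb E_{\hat\mu}V-D(\hat\mu,P_{s,a}))$ and $D(\cdot,P_{s,a})$ is convex and lower semicontinuous. The minimum is over sequences of time-dependent kernels $\hat P_{t;s,a}\in\Delta(\mathcal S)$. *)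

(* Defs.v *)
From HB Require Import structures.
From mathcomp Require Import all_boot all_order all_algebra.
From mathcomp Require Import all_classical all_reals.
From mathcomp Require Import ereal.
Set Implicit Arguments. Unset Strict Implicit. Unset Printing Implicit Defensive.
Import Order.TTheory GRing.Theory Num.Theory.
Local Open Scope ring_scope.
Local Open Scope classical_set_scope.

Section RobustMDP.
Variables (R : realType) (S A : finType).

Definition is_dist (T : finType) (mu : T -> R) : Prop :=
  (forall x, 0 <= mu x) /\ \sum_(x : T) mu x = 1.

Definition expect (mu V : S -> R) : R := \sum_(s : S) mu s * V s.

Definition convex_risk_measure (rho : (S -> R) -> R) : Prop :=
  [/\ (forall V V' : S -> R, (forall s, V' s <= V s) -> rho V <= rho V'),
      (forall (V : S -> R) (m : R), rho (fun s => V s + m) = rho V - m) &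
      (forall (V V' : S -> R) (l : R), 0 <= l <= 1 ->
          rho (fun s => l * V s + (1 - l) * V' s) <= l * rho V + (1 - l) * rho V')].

(* sigma p V  stands for  sigma(P_{s,a}, V) with p = P_{s,a} *)
Definition Dpen (sigma : (S -> R) -> (S -> R) -> R) (mu p : S -> R) : \bar R :=
  ereal_sup (range (fun V : S -> R => ((- sigma p V - expect mu V)%R)%:E)).

Definition Tpi (sigma : (S -> R) -> (S -> R) -> R) (P : S -> A -> S -> R)
  (r : S -> A -> R) (gamma : R) (pi : S -> A -> R) (V : S -> R) (s : S) : R :=
  \sum_(a : A) pi s a * (r s a - gamma * sigma (P s a) V).

Definition kernel_seq (Phat : nat -> S -> A -> S -> R) : Prop :=
  forall t s a, is_dist (Phat t s a).

Definition prev_ord (n : nat) (t : 'I_n) : 'I_n :=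
  Ordinal (leq_ltn_trans (leq_pred t) (ltn_ord t)).

(* probability of the trajectory (s_0,a_0,...,s_{n-1},a_{n-1}) given s_0 = s,
   a_t ~ pi(.|s_t), s_{t+1} ~ Phat_{t; s_t, a_t} *)
Definition traj_prob (pi : S -> A -> R) (Phat : nat -> S -> A -> S -> R)
  (s : S) (n : nat) (tau : {ffun 'I_n -> S * A}) : R :=
  \prod_(t < n)
    ((if val t == 0%N then (if (tau t).1 == s then 1 else 0)
      else Phat (val t).-1 (tau (prev_ord t)).1 (tau (prev_ord t)).2 (tau t).1)
     * pi (tau t).1 (tau t).2).

Definition traj_cost (sigma : (S -> R) -> (S -> R) -> R) (P : S -> A -> S -> R)
  (r : S -> A -> R) (gamma : R) (Phat : nat -> S -> A -> S -> R)
  (n : nat) (tau : {ffun 'I_n -> S * A}) : \bar R :=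
  (\sum_(t < n) (gamma ^+ t)%:E *
     ((r (tau t).1 (tau t).2)%:E
      + gamma%:E * Dpen sigma (Phat (val t) (tau t).1 (tau t).2) (P (tau t).1 (tau t).2)))%E.

(* expected cost over horizon t = 0..n-1 (i.e. h = n-1) *)
Definition Jcost (sigma : (S -> R) -> (S -> R) -> R) (P : S -> A -> S -> R)
  (r : S -> A -> R) (gamma : R) (pi : S -> A -> R)
  (Phat : nat -> S -> A -> S -> R) (n : nat) (s : S) : \bar R :=
  (\sum_(tau : {ffun 'I_n -> S * A})
     (traj_prob pi Phat s tau)%:E * traj_cost sigma P r gamma Phat tau)%E.

(* Vbar n = \overline V^pi_{0:n-1};  Vbar 0 = 0 = \overline V^pi_{0:-1} *)
Definition Vbar (sigma : (S -> R) -> (S -> R) -> R) (P : S -> A -> S -> R)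
  (r : S -> A -> R) (gamma : R) (pi : S -> A -> R) (n : nat) (s : S) : \bar R :=
  ereal_inf [set Jcost sigma P r gamma pi Phat n s | Phat in kernel_seq].

Definition is_argmin (sigma : (S -> R) -> (S -> R) -> R) (p : S -> R)
  (W : S -> \bar R) (mu : S -> R) : Prop :=
  is_dist mu /\
  forall mu' : S -> R, is_dist mu' ->
    (Dpen sigma mu p + \sum_(s' : S) (mu s')%:E * W s'
     <= Dpen sigma mu' p + \sum_(s' : S) (mu' s')%:E * W s')%E.

End RobustMDP.

(* Main.v *)
Require Import Defs.
From HB Require Import structures.
From mathcomp Require Import all_boot all_order all_algebra.
From mathcomp Require Import all_classical all_reals.
From mathcomp Require Import ereal.
From mathcomp Require Import topology normedtype matrix_normedtype.
From mathcomp Require Import lra.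
Import Order.TTheory GRing.Theory Num.Theory.
Import numFieldTopology.Exports numFieldNormedType.Exports.
Set Implicit Arguments. Unset Strict Implicit. Unset Printing Implicit Defensive.
Local Open Scope ring_scope.
Local Open Scope classical_set_scope.
Section Ninf.
Variable R : realDomainType.
Local Open Scope ereal_scope.
Lemma ninf_add (x y : \bar R) : x != -oo -> y != -oo -> x + y != -oo.
Proof. by case: x => [x||] //; case: y. Qed.
Lemma ninf_def (x y : \bar R) : x != -oo -> y != -oo -> x +? y.
Proof. by case: x => [x||] //; case: y. Qed.
Lemma ninf_sum (I : Type) (s : seq I) (P : pred I) (F : I -> \bar R) :
  (forall i, F i != -oo) -> \sum_(i <- s | P i) F i != -oo.
Proof. by move=> h; elim/big_ind: _ => //; exact: ninf_add. Qed.
Lemma ninf_mul (x : R) (y : \bar R) : (0 <= x)%R -> y != -oo -> x%:E * y != -oo.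
Proof.
move=> x0; case: y => [y||] // _.
rewrite mulry; have [->|xn] := eqVneq x 0%R; first by rewrite sgr0 mul0e.
by rewrite gtr0_sg ?mul1e // lt_neqAle eq_sym xn x0.
Qed.
Lemma ninf_distrr (I : Type) (s : seq I) (P : pred I) (x : R) (F : I -> \bar R) :
  (forall i, F i != -oo) ->
  x%:E * (\sum_(i <- s | P i) F i) = \sum_(i <- s | P i) x%:E * F i.
Proof. by move=> h; apply: fin_num_sume_distrr => // i j _ _; exact: ninf_def. Qed.
End Ninf.


Section Topo.
Variables (R : realType) (S : finType) (sigma : (S -> R) -> (S -> R) -> R).

Definition dual_rep (p : S -> R) := forall V : S -> R,
  (sigma p V)%:E =
  ereal_sup [set ((- expect mu V)%:E - Dpen sigma mu p)%E | mu in @is_dist R S].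

Lemma Dpen_ge mu p V : ((- sigma p V - expect mu V)%:E <= Dpen sigma mu p)%E.
Proof. by apply: ereal_sup_ubound; exists V. Qed.

Lemma Dpen_ninf mu p : Dpen sigma mu p != -oo%E.
Proof.
have := Dpen_ge mu p (fun _ => 0); case: (Dpen sigma mu p) => [d||] //.
Qed.

Local Notation n := #|S|.

Definition mux (x : 'rV[R]_n) : S -> R := fun s => x ord0 (enum_rank s).
Definition rowof (mu : S -> R) : 'rV[R]_n := \row_i mu (enum_val i).
Lemma muxK mu : mux (rowof mu) = mu.
Proof. by apply: funext => s; rewrite /mux mxE enum_rankK. Qed.

Definition lin (b : S -> R) (x : 'rV[R]_n) : R := expect (mux x) b.

Lemma lin_cont b : continuous (lin b).
Proof.
move=> x0; rewrite /lin /expect /mux.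
apply: (@cvg_big _ _ _ _ _ add_continuous _ (nbhs x0)).
by move=> s _; apply: cvgMr_tmp; exact: coord_continuous.
Qed.

Lemma cont_bound (h : 'rV[R]_n -> R) (x0 : 'rV[R]_n) (Fam : nat -> set 'rV[R]_n) (c : R) :
  continuous h ->
  (forall k, Fam k `<=` [set x | h x <= c + k.+1%:R^-1]) ->
  cluster (filter_from setT Fam) x0 -> h x0 <= c.
Proof.
move=> hc Hb Hcl; rewrite leNgt; apply/negP => hx.
have [k hk] := ltr_add_invr hx.
have Bn : nbhs x0 (h @^-1` [set z | c + k.+1%:R^-1 < z]).
  by apply: hc; apply: open_nbhs_nbhs; split => //; exact: open_gt.
have Fk : filter_from setT Fam (Fam k) by exists k.
have [y [Fy By]] := Hcl _ _ Fk Bn.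
by have := Hb k y Fy; rewrite /= leNgt By.
Qed.


Lemma expectB (mu a b : S -> R) :
  expect mu (fun s => a s - b s) = expect mu a - expect mu b.
Proof. by rewrite /expect -sumrB; apply: eq_bigr => s _; rewrite mulrBr. Qed.

Lemma lin_ind (x : 'rV[R]_n) s :
  lin (fun s' => if s' == s then -1 else 0) x = - mux x s.
Proof.
rewrite /lin /expect (bigD1 s) //= eqxx big1 ?addr0 ?mulrN1 // => s' /negbTE ->.
by rewrite mulr0.
Qed.

Lemma lin_one (x : 'rV[R]_n) c : lin (fun _ => c) x = (\sum_s mux x s) * c.
Proof. by rewrite /lin /expect mulr_suml. Qed.

Lemma argmin_core (p w : S -> R) : dual_rep p -> exists mu, is_dist mu /\
  forall V, - sigma p V - expect mu V <= - sigma p w - expect mu w.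
Proof.
move=> Hd.
set m := - sigma p w.
pose L (k : nat) := [set x : 'rV[R]_n | is_dist (mux x) /\
   forall V, - sigma p V - expect (mux x) V + expect (mux x) w <= m + k.+1%:R^-1].
have Lne k : L k !=set0.
  have e0 : 0 < k.+1%:R^-1 :> R by rewrite invr_gt0 ltr0Sn.
  move: e0; set e := k.+1%:R^-1 => e0.
  have : ((sigma p w - e)%:E < ereal_sup
      [set ((- expect mu w)%:E - Dpen sigma mu p)%E | mu in @is_dist R S])%E.
    by rewrite -Hd lte_fin; lra.
  move=> /ereal_sup_gt [_ [mu dmu <-]].
  have DV := Dpen_ge mu p; have := Dpen_ninf mu p.
  case: (Dpen sigma mu p) DV => [d||] // DV _.
    rewrite -EFinB lte_fin => hlt.
    exists (rowof mu); rewrite /L /= muxK; split => // V.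
    by have := DV V; rewrite lee_fin /m -/e => h; lra.
have Lmono i j : (i <= j)%N -> L j `<=` L i.
  move=> ij x [dx Hx]; split => // V; apply: le_trans (Hx V) _.
  by rewrite lerD2l lef_pV2 ?posrE ?ltr0Sn // ler_nat ltnS.
pose F := filter_from setT L.
have FF : ProperFilter F.
  apply: filter_from_proper; last by move=> k _; exact: Lne.
  apply: filter_from_filter; first by exists 0%N.
  move=> i j _ _; exists (maxn i j) => // x Lx.
  by split; apply: Lmono Lx; [exact: leq_maxl | exact: leq_maxr].
pose Bx := [set v : 'rV[R]_n | forall i, `[(0:R), 1]%classic (v ord0 i)].
have cB : compact Bx.
  have := @rV_compact R n (fun _ => `[(0:R), 1]%classic) (fun _ => @segment_compact R 0 1).
  move=> h; exact h.
have FB : F Bx.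
  exists 0%N => // x [[d0 d1] _] i; rewrite /= in_itv /=.
  have := d0 (enum_val i); rewrite /mux enum_valK => ->.
  rewrite -d1 /mux (bigD1 (enum_val i)) //= enum_valK lerDl sumr_ge0 // => s _.
  exact: d0.
have [x0 [_ clx0]] := cB F FF FB.
exists (mux x0); split; first split.
- move=> s; rewrite -oppr_le0 -lin_ind.
  apply: (cont_bound (@lin_cont _) _ clx0) => k x [[d0 _] _] /=.
  by rewrite lin_ind add0r; apply: le_trans (_ : 0 <= _); [rewrite oppr_le0 | rewrite invr_ge0].
- apply/le_anti/andP; split.
  + rewrite -[X in X <= _]mulr1 -lin_one.
    apply: (cont_bound (@lin_cont _) _ clx0) => k x [[_ d1] _] /=.
    by rewrite lin_one d1 mulr1 lerDl invr_ge0.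
  + rewrite -lerN2 -[X in X <= _]mulrN1 -lin_one.
    apply: (cont_bound (@lin_cont _) _ clx0) => k x [[_ d1] _] /=.
    by rewrite lin_one d1 mulrN1 lerDl invr_ge0.
move=> V.
have : lin (fun s => w s - V s) x0 <= m + sigma p V.
  apply: (cont_bound (@lin_cont _) _ clx0) => k x [_ Hx] /=.
  rewrite /lin expectB; have := Hx V; set e := k.+1%:R^-1 => h; lra.
rewrite /lin expectB; lra.
Qed.





Lemma dual_lb p w mu : ((- sigma p w)%:E <= Dpen sigma mu p + (expect mu w)%:E)%E.
Proof.
move: (Dpen_ge mu p w) (Dpen_ninf mu p); case: (Dpen sigma mu p) => [d||] //.
  move=> h _; rewrite -EFinD lee_fin; rewrite lee_fin in h; lra.
by move=> _ _; rewrite addye // leey.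
Qed.

Lemma lee_addr_real (x : \bar R) (a b : R) : (x <= (a - b)%:E -> x + b%:E <= a%:E)%E.
Proof.
case: x => [x||].
- by rewrite -EFinD !lee_fin; lra.
- by rewrite leye_eq.
- by move=> _; rewrite leNye.
Qed.

Lemma expectE (mu w : S -> R) :
  (\sum_(s' : S) (mu s')%:E * (w s')%:E)%E = (expect mu w)%:E.
Proof. by rewrite /expect -sumEFin; apply: eq_bigr => s' _; rewrite EFinM. Qed.

Lemma argmin_fin (p : S -> R) (W : S -> \bar R) : dual_rep p ->
  (forall s', W s' \is a fin_num) -> exists mu, is_argmin sigma p W mu.
Proof.
move=> Hd HW; set w := fun s' => fine (W s').
have -> : W = fun s' => (w s')%:E by apply: funext => s'; rewrite /w fineK.
have [mu [dmu Hmu]] := argmin_core w Hd.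
exists mu; split=> // mu' dmu'; rewrite !expectE.
apply: le_trans (dual_lb p w mu'); apply: lee_addr_real.
by apply: ge_ereal_sup => _ [V _ <-]; rewrite lee_fin Hmu.
Qed.

Lemma argmin_val (p : S -> R) (w : S -> R) mu : dual_rep p ->
  is_argmin sigma p (fun s' => (w s')%:E) mu ->
  (Dpen sigma mu p + (expect mu w)%:E)%E = (- sigma p w)%:E.
Proof.
move=> Hd [dmu Hmu]; apply/le_anti; rewrite dual_lb andbT.
have [mu' [dmu' Hmu']] := argmin_core w Hd.
have := Hmu mu' dmu'; rewrite !expectE => h; apply: le_trans h _.
apply: lee_addr_real.
by apply: ge_ereal_sup => _ [V _ <-]; rewrite lee_fin Hmu'.
Qed.

End Topo.




Section DP.
Variables (R : realType) (S A : finType).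
Variables (P : S -> A -> S -> R) (r : S -> A -> R) (gamma : R)
  (sigma : (S -> R) -> (S -> R) -> R) (pi : S -> A -> R).
Hypothesis pi_dist : forall s, is_dist (pi s).
Hypothesis gamma0 : 0 <= gamma.

Definition shiftK (Phat : nat -> S -> A -> S -> R) : nat -> S -> A -> S -> R :=
  fun t => Phat t.+1.

Definition consf n (x : S * A) (f : {ffun 'I_n -> S * A}) : {ffun 'I_n.+1 -> S * A} :=
  [ffun i => if unlift ord0 i is Some j then f j else x].
Definition tailf n (tau : {ffun 'I_n.+1 -> S * A}) : {ffun 'I_n -> S * A} :=
  [ffun j => tau (lift ord0 j)].

Lemma consf0 n x f : @consf n x f ord0 = x.
Proof. by rewrite ffunE unlift_none. Qed.
Lemma consfS n x f (k : 'I_n.+1) (j : 'I_n) : val k = (val j).+1 -> @consf n x f k = f j.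
Proof.
move=> e; have -> : k = lift ord0 j by apply: val_inj; rewrite /= e /bump leq0n add1n.
by rewrite ffunE liftK.
Qed.

Lemma big_ffunS (T : Type) (idx : T) (op : Monoid.com_law idx) n
    (F : {ffun 'I_n.+1 -> S * A} -> T) :
  \big[op/idx]_(tau : {ffun 'I_n.+1 -> S * A}) F tau =
  \big[op/idx]_(x : S * A) \big[op/idx]_(f : {ffun 'I_n -> S * A}) F (consf x f).
Proof.
rewrite pair_big /= (reindex (fun p : (S * A) * {ffun 'I_n -> S * A} => consf p.1 p.2)) //.
exists (fun tau : {ffun 'I_n.+1 -> S * A} => (tau ord0, tailf tau)) => [[x f] _ | tau _] /=.
  congr pair; first exact: consf0.
  by apply/ffunP => j; rewrite ffunE ffunE liftK.
by apply/ffunP => i; rewrite ffunE; case: unliftP => [j ->|->] //; rewrite ffunE.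
Qed.

Lemma sum_pair_fst (T : Type) (idx : T) (op : Monoid.com_law idx) (G : S * A -> T) s :
  (forall x, x.1 != s -> G x = idx) ->
  \big[op/idx]_(x : S * A) G x = \big[op/idx]_(a : A) G (s, a).
Proof.
move=> H; rewrite (eq_bigr (fun p => G (p.1, p.2))); last by case.
rewrite -(pair_bigA _ (fun i j => G (i, j))) (bigD1 s) //= [X in op _ X]big1 ?Monoid.mulm1 // => s' ns.
by apply: big1 => a _; apply: H.
Qed.

Definition fac Phat s n (tau : {ffun 'I_n -> S * A}) (t : 'I_n) : R :=
  (if val t == 0%N then (if (tau t).1 == s then 1 else 0)
   else Phat (val t).-1 (tau (prev_ord t)).1 (tau (prev_ord t)).2 (tau t).1)
  * pi (tau t).1 (tau t).2.

Lemma traj_probE Phat s n (tau : {ffun 'I_n -> S * A}) :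
  traj_prob pi Phat s tau = \prod_(t < n) fac Phat s tau t.
Proof. by []. Qed.

Lemma vlift0 n (j : 'I_n) : val (lift ord0 j) = (val j).+1.
Proof. exact: lift0. Qed.
Lemma vprev n (j : 'I_n) : val (prev_ord j) = (val j).-1.
Proof. by []. Qed.

Lemma fac_SS Phat s s' n x (f : {ffun 'I_n.+1 -> S * A}) (i : 'I_n) :
  fac Phat s (consf x f) (lift ord0 (lift ord0 i)) = fac (shiftK Phat) s' f (lift ord0 i).
Proof.
rewrite /fac.
rewrite (@consfS _ x f (lift ord0 (lift ord0 i)) (lift ord0 i)); last by rewrite !vlift0.
rewrite (@consfS _ x f (prev_ord (lift ord0 (lift ord0 i))) (prev_ord (lift ord0 i))); last first.
  by rewrite !vprev !vlift0.
by rewrite !vlift0 /shiftK.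
Qed.

Lemma fac_0 Phat s n (tau : {ffun 'I_n.+1 -> S * A}) :
  fac Phat s tau ord0 = (if (tau ord0).1 == s then 1 else 0) * pi (tau ord0).1 (tau ord0).2.
Proof. by []. Qed.

Lemma consf_v0 n x f (k : 'I_n.+1) : val k = 0%N -> @consf n x f k = x.
Proof. move=> e; have -> : k = ord0 by apply: val_inj. exact: consf0. Qed.

Lemma fac_1 Phat s n x (f : {ffun 'I_n.+1 -> S * A}) :
  fac Phat s (consf x f) (lift ord0 ord0) = Phat 0%N x.1 x.2 (f ord0).1 * pi (f ord0).1 (f ord0).2.
Proof.
rewrite /fac (@consfS _ x f (lift ord0 ord0) ord0) ?vlift0 //.
by rewrite (@consf_v0 _ x f (prev_ord (lift ord0 ord0))) // vprev vlift0.
Qed.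

Lemma traj_prob_cons Phat s n x f : is_dist (Phat 0%N x.1 x.2) ->
  traj_prob pi Phat s (@consf n x f) =
  (if x.1 == s then 1 else 0) * pi x.1 x.2 *
  \sum_(s' : S) Phat 0%N x.1 x.2 s' * traj_prob pi (shiftK Phat) s' f.
Proof.
move=> [_ Hsum]; rewrite traj_probE big_ord_recl fac_0 consf0; congr (_ * _).
case: n f => [|n] f.
  rewrite big_ord0 -[LHS]Hsum; apply: eq_bigr => s' _.
  by rewrite traj_probE big_ord0 mulr1.
rewrite big_ord_recl.
rewrite (eq_bigr (fun i => fac (shiftK Phat) s f (lift ord0 i))); last first.
  by move=> i _; exact: fac_SS.
rewrite (bigD1 (f ord0).1) //= [X in _ + X]big1 ?addr0; last first.
  move=> s' ns; rewrite traj_probE big_ord_recl fac_0 eq_sym (negbTE ns).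
  by rewrite !mul0r mulr0.
rewrite traj_probE big_ord_recl fac_0 eqxx mul1r fac_1 -!mulrA; congr (_ * (_ * _)).
Qed.


Lemma traj_prob_ge0 Phat s n (tau : {ffun 'I_n -> S * A}) :
  kernel_seq Phat -> 0 <= traj_prob pi Phat s tau.
Proof.
move=> HK; rewrite traj_probE; apply: prodr_ge0 => t _; rewrite /fac.
apply: mulr_ge0; last by case: (pi_dist (tau t).1) => h _; exact: h.
case: ifP => _; first by case: ifP.
by case: (HK (val t).-1 (tau (prev_ord t)).1 (tau (prev_ord t)).2) => h _; exact: h.
Qed.

Lemma kernel_shift Phat : kernel_seq Phat -> kernel_seq (shiftK Phat).
Proof. by move=> HK t; apply: HK. Qed.

Lemma traj_prob_sum1 n : forall Phat s, kernel_seq Phat ->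
  \sum_(tau : {ffun 'I_n -> S * A}) traj_prob pi Phat s tau = 1.
Proof.
elim: n => [|n IH] Phat s HK.
  rewrite (eq_bigr (fun _ => 1)); last by move=> tau _; rewrite traj_probE big_ord0.
  by rewrite sumr_const card_ffun card_ord expn0.
rewrite big_ffunS (@sum_pair_fst _ _ _ _ s); last first.
  by move=> x nx; apply: big1 => f _; rewrite traj_prob_cons ?(negbTE nx) ?mul0r //; exact: HK.
rewrite -(proj2 (pi_dist s)); apply: eq_bigr => a _.
rewrite (eq_bigr (fun f => pi s a * \sum_(s' : S) Phat 0%N s a s' * traj_prob pi (shiftK Phat) s' f)); last first.
  by move=> f _; rewrite traj_prob_cons /= ?eqxx ?mul1r //; exact: HK.
rewrite -mulr_sumr exchange_big /=.
rewrite (eq_bigr (fun s' => Phat 0%N s a s')); first by rewrite (proj2 (HK 0%N s a)) mulr1.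
by move=> s' _; rewrite -mulr_sumr IH ?mulr1 //; exact: kernel_shift.
Qed.

Lemma traj_cost_ninf Phat n (tau : {ffun 'I_n -> S * A}) :
  traj_cost sigma P r gamma Phat tau != -oo%E.
Proof.
apply: ninf_sum => t; apply: ninf_mul; first exact: exprn_ge0.
by apply: ninf_add => //; apply: ninf_mul => //; exact: Dpen_ninf.
Qed.

Lemma traj_cost_cons Phat n x (f : {ffun 'I_n -> S * A}) :
  traj_cost sigma P r gamma Phat (consf x f) =
  ((r x.1 x.2)%:E + gamma%:E * Dpen sigma (Phat 0%N x.1 x.2) (P x.1 x.2)
   + gamma%:E * traj_cost sigma P r gamma (shiftK Phat) f)%E.
Proof.
rewrite /traj_cost big_ord_recl consf0 expr0 mul1e; congr (_ + _)%E.
rewrite ninf_distrr; last first.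
  move=> t; apply: ninf_mul; first exact: exprn_ge0.
  by apply: ninf_add => //; apply: ninf_mul => //; exact: Dpen_ninf.
apply: eq_bigr => i _.
rewrite (@consfS _ x f (lift ord0 i) i) ?vlift0 //.
by rewrite exprS EFinM muleA.
Qed.

Lemma Jcost_ninf Phat n s : kernel_seq Phat ->
  Jcost sigma P r gamma pi Phat n s != -oo%E.
Proof.
move=> HK; apply: ninf_sum => tau; apply: ninf_mul; first exact: traj_prob_ge0.
exact: traj_cost_ninf.
Qed.

Lemma Jcost0 Phat s : Jcost sigma P r gamma pi Phat 0 s = 0%E.
Proof. by apply: big1 => tau _; rewrite /traj_cost big_ord0 mule0. Qed.


Lemma Jcost_rec Phat n s : kernel_seq Phat ->
  Jcost sigma P r gamma pi Phat n.+1 s =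
  (\sum_(a : A) (pi s a)%:E * ((r s a)%:E + gamma%:E *
      (Dpen sigma (Phat 0%N s a) (P s a) +
       \sum_(s' : S) (Phat 0%N s a s')%:E * Jcost sigma P r gamma pi (shiftK Phat) n s')))%E.
Proof.
move=> HK; have HK' := kernel_shift HK.
rewrite /Jcost big_ffunS (@sum_pair_fst _ _ _ _ s); last first.
  move=> x nx; apply: big1 => f _.
  by rewrite traj_prob_cons ?(negbTE nx) ?mul0r ?mul0e //; exact: HK.
apply: eq_bigr => a _.
set Q := fun f : {ffun 'I_n -> S * A} =>
  \sum_(s' : S) Phat 0%N s a s' * traj_prob pi (shiftK Phat) s' f.
have Q0 f : 0 <= Q f.
  apply: sumr_ge0 => s' _; apply: mulr_ge0; first exact: (proj1 (HK 0%N s a)).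
  exact: traj_prob_ge0.
set c0 := ((r s a)%:E + gamma%:E * Dpen sigma (Phat 0%N s a) (P s a))%E.
have c0n : c0 != -oo%E.
  by apply: ninf_add => //; apply: ninf_mul => //; exact: Dpen_ninf.
rewrite (eq_bigr (fun f => (pi s a)%:E * ((Q f)%:E * (c0 +
    gamma%:E * traj_cost sigma P r gamma (shiftK Phat) f))))%E; last first.
  move=> f _; rewrite traj_prob_cons; last exact: HK.
  by rewrite traj_cost_cons /= eqxx mul1r EFinM muleA.
rewrite -ninf_distrr; last first.
  move=> f; apply: ninf_mul => //; apply: ninf_add => //.
  by apply: ninf_mul => //; exact: traj_cost_ninf.
congr (_ * _)%E.
rewrite (eq_bigr (fun f => (Q f)%:E * c0 +
    (Q f)%:E * (gamma%:E * traj_cost sigma P r gamma (shiftK Phat) f)))%E; last first.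
  move=> f _; rewrite muleDr //; apply: ninf_def => //.
  by apply: ninf_mul => //; exact: traj_cost_ninf.
rewrite big_split /=.
have HQ : \sum_f Q f = 1.
  rewrite /Q exchange_big /= -(proj2 (HK 0%N s a)); apply: eq_bigr => s' _.
  by rewrite -mulr_sumr traj_prob_sum1 ?mulr1.
rewrite -ge0_sume_distrl; last by move=> f _; rewrite lee_fin.
rewrite sumEFin HQ mul1e.
rewrite (eq_bigr (fun f => gamma%:E * ((Q f)%:E *
    traj_cost sigma P r gamma (shiftK Phat) f)))%E; last by move=> f _; rewrite muleCA.
rewrite -ninf_distrr; last first.
  by move=> f; apply: ninf_mul => //; exact: traj_cost_ninf.
have -> : (\sum_(f : {ffun 'I_n -> S * A}) (Q f)%:E * traj_cost sigma P r gamma (shiftK Phat) f =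
    \sum_(s' : S) (Phat 0%N s a s')%:E *
      \sum_(tau : {ffun 'I_n -> S * A})
        (traj_prob pi (shiftK Phat) s' tau)%:E * traj_cost sigma P r gamma (shiftK Phat) tau)%E.
  transitivity (\sum_(f : {ffun 'I_n -> S * A}) \sum_(s' : S) (Phat 0%N s a s')%:E *
      ((traj_prob pi (shiftK Phat) s' f)%:E * traj_cost sigma P r gamma (shiftK Phat) f))%E.
    apply: eq_bigr => f _; rewrite /Q -sumEFin ge0_sume_distrl; last first.
      move=> s' _; rewrite lee_fin; apply: mulr_ge0; first exact: (proj1 (HK 0%N s a)).
      exact: traj_prob_ge0.
    by apply: eq_bigr => s' _; rewrite EFinM muleA.
  rewrite exchange_big /=; apply: eq_bigr => s' _; rewrite ninf_distrr //.
  by move=> f; apply: ninf_mul; [exact: traj_prob_ge0 | exact: traj_cost_ninf].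
rewrite muleDr ?addeA //; apply: ninf_def; first exact: Dpen_ninf.
apply: ninf_sum => s'; apply: ninf_mul; first exact: (proj1 (HK 0%N s a)).
exact: Jcost_ninf.
Qed.

End DP.


Section Main.
Variables (R : realType) (S A : finType)
  (P : S -> A -> S -> R) (r : S -> A -> R) (gamma : R)
  (sigma : (S -> R) -> (S -> R) -> R) (pi : S -> A -> R).
Hypothesis HP : forall s a, is_dist (P s a).
Hypothesis Hdual : forall s a, dual_rep sigma (P s a).
Hypothesis pi_dist : forall s, is_dist (pi s).
Hypothesis gamma0 : 0 <= gamma.

Local Notation V := (Vbar sigma P r gamma pi).
Local Notation J := (Jcost sigma P r gamma pi).

Definition acond n (Phat : nat -> S -> A -> S -> R) :=
  forall t s a, (t < n)%N -> is_argmin sigma (P s a) (V (n.-1 - t)) (Phat t s a).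

Lemma Vbar_le Phat n s : kernel_seq Phat -> (V n s <= J Phat n s)%E.
Proof. by move=> HK; apply: ereal_inf_lbound; exists Phat. Qed.

Lemma Vbar_eq Phat n s : kernel_seq Phat ->
  (forall Psi, kernel_seq Psi -> (J Phat n s <= J Psi n s)%E) -> V n s = J Phat n s.
Proof.
move=> HK H; apply/le_anti; rewrite Vbar_le //=.
by apply/ereal_infP => _ [Psi HPsi <-]; exact: H.
Qed.

Lemma TpiE w s : ((Tpi sigma P r gamma pi w s)%:E =
  \sum_(a : A) (pi s a)%:E * ((r s a)%:E + gamma%:E * (- sigma (P s a) w)%:E))%E.
Proof.
rewrite /Tpi -sumEFin; apply: eq_bigr => a _.
by rewrite -mulrN EFinM EFinD EFinM.
Qed.

Lemma J_lower Phat n s (w : S -> R) : kernel_seq Phat ->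
  (forall s', ((w s')%:E <= J (shiftK Phat) n s')%E) ->
  ((Tpi sigma P r gamma pi w s)%:E <= J Phat n.+1 s)%E.
Proof.
move=> HK Hw; rewrite (Jcost_rec P r sigma pi_dist gamma0) // TpiE.
apply: lee_sum => a _.
apply: lee_wpmul2l; first by rewrite lee_fin; exact: (proj1 (pi_dist s)).
apply: leeD2l; apply: lee_wpmul2l; first by rewrite lee_fin.
apply: le_trans (dual_lb sigma (P s a) w (Phat 0%N s a)) _.
apply: leeD2l; rewrite -expectE; apply: lee_sum => s' _.
by apply: lee_wpmul2l => //; rewrite lee_fin; exact: (proj1 (HK 0%N s a)).
Qed.

Lemma J_eq Phat n s (w : S -> R) : kernel_seq Phat ->
  (forall s', J (shiftK Phat) n s' = (w s')%:E) ->
  (forall a, is_argmin sigma (P s a) (fun s' => (w s')%:E) (Phat 0%N s a)) ->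
  J Phat n.+1 s = (Tpi sigma P r gamma pi w s)%:E.
Proof.
move=> HK Hw Ha; rewrite (Jcost_rec P r sigma pi_dist gamma0) // TpiE.
apply: eq_bigr => a _.
rewrite (eq_bigr (fun s' => (Phat 0%N s a s')%:E * (w s')%:E)%E); last first.
  by move=> s' _; rewrite Hw.
by rewrite expectE (argmin_val (Hdual s a) (Ha a)).
Qed.

Definition Qn n := (forall k, (k <= n)%N -> forall s, V k s \is a fin_num) /\
  (forall Phat, kernel_seq Phat -> acond n Phat -> forall s, J Phat n s = V n s).

Lemma acond_shift n Phat : acond n.+1 Phat -> acond n (shiftK Phat).
Proof.
move=> H t s a tn; have := H t.+1 s a tn.
have -> : (n.+1.-1 - t.+1 = n.-1 - t)%N by case: n {H tn}.
by [].
Qed.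

Lemma exists_acond n : (forall k, (k <= n)%N -> forall s, V k s \is a fin_num) ->
  exists Phat, kernel_seq Phat /\ acond n.+1 Phat.
Proof.
move=> Hf.
have H : forall x : nat * S * A, exists mu : S -> R, is_dist mu /\
    ((x.1.1 < n.+1)%N -> is_argmin sigma (P x.1.2 x.2) (V (n - x.1.1)) mu).
  case=> [[t s] a] /=; case: (ltnP t n.+1) => ht.
    have [mu Hmu] := argmin_fin (Hdual s a) (Hf (n - t)%N (leq_subr t n)).
    by exists mu; split => //; case: Hmu.
  by exists (P s a); split => //; rewrite ltnNge ht.
have [f Hf'] := choice H.
exists (fun t s a => f (t, s, a)); split.
  by move=> t s a; case: (Hf' (t, s, a)).
by move=> t s a ht; case: (Hf' (t, s, a)) => _ /(_ ht).
Qed.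

Lemma step n : Qn n ->
  (forall s, V n.+1 s = (Tpi sigma P r gamma pi (fun s' => fine (V n s')) s)%:E) /\ Qn n.+1.
Proof.
move=> [Hf Ha]; set w := fun s' => fine (V n s').
have Vw s' : V n s' = (w s')%:E by rewrite /w fineK // Hf.
have Vw' : V n = fun s' => (w s')%:E by apply: funext.
have Hargn Phat : kernel_seq Phat -> acond n.+1 Phat ->
    forall s, J Phat n.+1 s = (Tpi sigma P r gamma pi w s)%:E.
  move=> HK Hc s; apply: J_eq => //.
    by move=> s'; rewrite Ha ?Vw //; [exact: kernel_shift | exact: acond_shift].
  by move=> a; have := Hc 0%N s a (ltn0Sn n); rewrite /= subn0 Vw'.
have Hlow Psi s : kernel_seq Psi -> ((Tpi sigma P r gamma pi w s)%:E <= J Psi n.+1 s)%E.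
  move=> HK; apply: J_lower => // s'; rewrite -Vw; apply: Vbar_le; exact: kernel_shift.
have [Phs [HKs Hcs]] := exists_acond Hf.
have Vval s : V n.+1 s = (Tpi sigma P r gamma pi w s)%:E.
  rewrite (Vbar_eq (s := s) HKs) ?Hargn // => Psi HPsi; exact: Hlow.
split => //; split.
  move=> k; rewrite leq_eqVlt => /orP [/eqP -> s|]; first by rewrite Vval.
  by rewrite ltnS => /Hf.
by move=> Phat HK Hc s; rewrite Hargn // Vval.
Qed.

Lemma Qzero : Qn 0.
Proof.
have HK0 : kernel_seq (fun _ => P) by move=> t s a; exact: HP.
have V0 s : V 0 s = 0%E.
  by rewrite (Vbar_eq (s := s) HK0) ?Jcost0 // => Psi _; rewrite !Jcost0.
split.
  by move=> k; rewrite leqn0 => /eqP -> s; rewrite V0.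
by move=> Phat _ _ s; rewrite V0 Jcost0.
Qed.

Lemma Qall n : Qn n.
Proof. by elim: n => [|n IH]; [exact: Qzero | exact: (step IH).2]. Qed.

Lemma main_sec :
  [/\ (forall n s, V n s \is a fin_num),
      (forall n s, V n.+1 s =
         (Tpi sigma P r gamma pi (fun s' => fine (V n s')) s)%:E),
      (forall n t s a, (t < n)%N -> exists mu : S -> R,
         is_argmin sigma (P s a) (V (n.-1 - t)) mu) &
      (forall n (Phat : nat -> S -> A -> S -> R),
         kernel_seq Phat ->
         (forall t s a, (t < n)%N ->
            is_argmin sigma (P s a) (V (n.-1 - t)) (Phat t s a)) ->
         forall s, J Phat n s = V n s)].
Proof.
split.
- by move=> n s; exact: (proj1 (Qall n)) n (leqnn n) s.
- by move=> n s; exact: (proj1 (step (Qall n))) s.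
- move=> n t s a _; apply: (argmin_fin (Hdual s a)).
  by apply: (proj1 (Qall n.-1)); exact: leq_subr.
- by move=> n Phat HK Hc s; exact: (proj2 (Qall n)) Phat HK Hc s.
Qed.

End Main.


Unset Implicit Arguments.

Theorem mainTheorem4 (R : realType) (S A : finType)
  (P : S -> A -> S -> R) (r : S -> A -> R) (gamma : R)
  (sigma : (S -> R) -> (S -> R) -> R) (pi : S -> A -> R) :
  (forall s a, is_dist (P s a)) ->
  (forall s a, 0 <= r s a <= 1) ->
  0 <= gamma < 1 ->
  (forall s a, convex_risk_measure (sigma (P s a))) ->
  (* standing fact from the context: dual representation of sigma *)
  (forall s a (V : S -> R),
     (sigma (P s a) V)%:E =
     ereal_sup [set ((- expect mu V)%:E - Dpen sigma mu (P s a))%E | mu in @is_dist R S]) ->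
  (forall s, is_dist (pi s)) ->
  [/\ (* Vbar^pi_{0:h} is real-valued for every h >= -1 *)
      (forall n s, Vbar sigma P r gamma pi n s \is a fin_num),
      (* Vbar^pi_{0:h+1} = T^pi Vbar^pi_{0:h}, h >= -1 (n = h+1) *)
      (forall n s, Vbar sigma P r gamma pi n.+1 s =
         (Tpi sigma P r gamma pi (fun s' => fine (Vbar sigma P r gamma pi n s')) s)%:E),
      (* the argmin sets are nonempty *)
      (forall n t s a, (t < n)%N -> exists mu : S -> R,
         is_argmin sigma (P s a) (Vbar sigma P r gamma pi (n.-1 - t)) mu) &
      (* any kernels chosen in the argmins attain the minimum, for every s *)
      (forall n (Phat : nat -> S -> A -> S -> R),
         kernel_seq Phat ->
         (forall t s a, (t < n)%N ->
            is_argmin sigma (P s a) (Vbar sigma P r gamma pi (n.-1 - t)) (Phat t s a)) ->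
         forall s, Jcost sigma P r gamma pi Phat n s = Vbar sigma P r gamma pi n s)].
Proof.
move=> HP _ /andP[g0 _] _ Hdual Hpi.
exact: (main_sec r HP Hdual Hpi g0).
Qed.
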